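(* Let $n$ be a power of two and let $\mathbf{X}=\sum_{j=1}^{n} x_j\,|j-1\rangle\langle j-1|$ be a real diagonal $n\times n$ matrix with $\|\mathbf{X}\|<1$. Suppose we are given a unitary (exact) block encoding of $\mathbf{X}$ implemented by a quantum circuit of depth $\mathcal{O}(\log n)$. Then for any two integers $1\le j,k\le n$ there exists a quantum circuit of depth $\mathcal{O}(\log n)$, which uses the given block encoding of $\mathbf{X}$ at most two times and uses $\log(n)+3$ ancilla qubits, that is a block encoding of the $n\times n$ matrix $x_j\,|k-1\rangle\langle k-1|$, i.e. the diagonal matrix whose only nonzero entry is $x_j$, located at the $k$-th diagonal position.
   Context: Block encoding: for a matrix $A$ of size $N\times N$ with operator norm $\|A\|<1$, a unitary $U$ acting on an ancilla register together with an $N$-dimensional system is an exact block encoding of $A$ if $U=|\mathbf{0}\rangle\langle\mathbf{0}|\otimes A+\cdots$, i.e. $A$ is the top-left block of $U$ with respect to the ancilla state $|\mathbf{0}\rangle$ (equivalently $(\langle\mathbf{0}|\otimes I)U(|\mathbf{0}\rangle\otimes I)=A$). It is an $\epsilon$-approximated block encoding of $A$ if $(\langle\mathbf{0}|\otimes I)U(|\mathbf{0}\rangle\otimes I)=\tilde A$ with $\|\tilde A-A\|\le\epsilon$. The states $|j\rangle$, $j=0,\dots,n-1$, are computational basis states of $\log n$ qubits. *)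

(* Defs.v *)
From HB Require Import structures.
From mathcomp Require Import all_boot all_order all_algebra.
Set Implicit Arguments. Unset Strict Implicit. Unset Printing Implicit Defensive.
Import Order.TTheory GRing.Theory Num.Theory.
Local Open Scope ring_scope.

Section QC.
Variable C : numClosedFieldType.

Definition dagger (n : nat) (M : 'M[C]_n) : 'M[C]_n := (map_mx Num.conj M)^T.
Definition unitary (n : nat) (M : 'M[C]_n) : bool := M *m dagger M == 1%:M.

(* i-th bit (qubit i) of a computational basis index; qubit 0 = least significant *)
Definition bitn (i b : nat) : bool := odd (b %/ 2 ^ i).

(* The operator on w qubits acting as V (a 2^k x 2^k matrix) on the qubits
   p 0, ..., p (k-1) (qubit l of V is placed on wire p l) and as the identity
   on the remaining wires. *)
Definition embed (w k : nat) (p : 'I_k -> 'I_w) (V : 'M[C]_(2 ^ k)) : 'M[C]_(2 ^ w) :=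
  \matrix_(r, t)
    (if [forall i : 'I_w, (i \notin codom p) ==> (bitn i r == bitn i t)]
     then \sum_(x : 'I_(2 ^ k) | [forall l : 'I_k, bitn l x == bitn (p l) r])
          \sum_(y : 'I_(2 ^ k) | [forall l : 'I_k, bitn l y == bitn (p l) t]) V x y
     else 0).

Record gate (w : nat) := Gate { gk : nat; gp : 'I_gk -> 'I_w; gV : 'M[C]_(2 ^ gk) }.

Definition gate_wires w (g : gate w) : seq 'I_w := [seq @gp w g i | i <- enum 'I_(gk g)].
Definition gate_ok w (g : gate w) : bool := (@gk w g <= 2)%N && unitary (@gV w g).
Definition gate_mx w (g : gate w) : 'M[C]_(2 ^ w) := embed (@gp w g) (@gV w g).

Definition layer (w : nat) := seq (gate w).
Definition layer_ok w (l : layer w) : bool :=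
  all (@gate_ok w) l && uniq (flatten (map (@gate_wires w) l)).
Definition layer_mx w (l : layer w) : 'M[C]_(2 ^ w) :=
  foldr (fun g M => gate_mx g *m M) 1%:M l.

(* A quantum circuit = sequence of layers, applied first to last; depth = number of layers. *)
Definition circuit (w : nat) := seq (layer w).
Definition circuit_ok w (c : circuit w) : bool := all (@layer_ok w) c.
Definition circuit_mx w (c : circuit w) : 'M[C]_(2 ^ w) :=
  foldl (fun M l => layer_mx l *m M) 1%:M c.
Definition depth w (c : circuit w) : nat := size c.

(* Oracle circuits on w wires that may call a given m-qubit unitary U (or its
   inverse U^dagger, when the flag is true) on the wires given by an injective map. *)
Inductive ostep (w m : nat) :=
  | OLayer of layer w
  | OCall of ('I_m -> 'I_w) & bool.
Definition ocircuit (w m : nat) := seq (ostep w m).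

Definition ostep_ok w m (st : ostep w m) : bool :=
  match st with OLayer l => layer_ok l | OCall p _ => injectiveb p end.
Definition ocircuit_ok w m (q : ocircuit w m) : bool := all (@ostep_ok w m) q.
Definition ncalls w m (q : ocircuit w m) : nat :=
  count (fun st => if st is OCall _ _ then true else false) q.

Definition ostep_mx w m (U : 'M[C]_(2 ^ m)) (st : ostep w m) : 'M[C]_(2 ^ w) :=
  match st with
  | OLayer l => layer_mx l
  | OCall p dag => embed p (if dag then dagger U else U)
  end.
Definition ocircuit_mx w m (U : 'M[C]_(2 ^ m)) (q : ocircuit w m) : 'M[C]_(2 ^ w) :=
  foldl (fun M st => ostep_mx U st *m M) 1%:M q.

(* depth of the circuit obtained by substituting, for each call, a circuit of
   depth dU implementing U (its inverse is the reversed adjoint circuit, same depth) *)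
Definition odepth w m (dU : nat) (q : ocircuit w m) : nat :=
  \sum_(st <- q) (if st is OCall _ _ then dU else 1%N).

(* Block encoding: with s system qubits (the low-order wires 0..s-1) and a
   ancilla qubits (wires s..s+a-1), U is an exact block encoding of A iff U is
   unitary and (<0|_anc (x) I) U (|0>_anc (x) I) = A. The basis index of
   |anc>|sys> is anc * 2^s + sys, so ancilla |0...0> corresponds to indices < 2^s. *)
Lemma exp2_le (s a : nat) : (2 ^ s <= 2 ^ (a + s))%N.
Proof. by rewrite leq_exp2l // leq_addl. Qed.

Definition block_encoding (s a : nat) (U : 'M[C]_(2 ^ (a + s))) (A : 'M[C]_(2 ^ s)) : Prop :=
  unitary U /\
  forall i j : 'I_(2 ^ s), U (widen_ord (exp2_le s a) i) (widen_ord (exp2_le s a) j) = A i j.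

(* the real diagonal matrix X = sum_j x_j |j-1><j-1| (0-based indices here) *)
Definition diagX (n : nat) (x : 'I_n -> C) : 'M[C]_n := diag_mx (\row_i x i).

End QC.

(* Main.v *)
Require Import Defs.
From HB Require Import structures.
From mathcomp Require Import all_boot all_order all_algebra.
From mathcomp Require Import zify fingroup perm.
Import Order.TTheory GRing.Theory Num.Theory.
Set Implicit Arguments. Unset Strict Implicit. Unset Printing Implicit Defensive.

Module Helpers.

Lemma bitn0 r : bitn 0 r = odd r.
Proof. by rewrite /bitn expn0 divn1. Qed.

Lemma bitnS i r : bitn i.+1 r = bitn i r./2.
Proof. by rewrite /bitn expnS divnMA divn2. Qed.

Lemma bitn_big w r i : r < 2 ^ w -> w <= i -> bitn i r = false.
Proof.
move=> hr hi; rewrite /bitn divn_small //.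
by apply: (leq_trans hr); rewrite leq_exp2l.
Qed.

Lemma bitn_ext w r t : r < 2 ^ w -> t < 2 ^ w ->
  (forall i, i < w -> bitn i r = bitn i t) -> r = t.
Proof.
elim: w r t => [|w IH] r t hr ht H.
  rewrite expn0 in hr ht; have -> : r = 0 by lia. by have -> : t = 0 by lia.
rewrite -(odd_double_half r) -(odd_double_half t).
have h0 := H 0 isT; rewrite !bitn0 in h0; rewrite h0.
congr (_ + _.*2).
apply: IH.
- rewrite -divn2; rewrite expnS in hr; by rewrite ltn_divLR // mulnC.
- rewrite -divn2; rewrite expnS in ht; by rewrite ltn_divLR // mulnC.
- by move=> i hi; rewrite -!bitnS; apply: H.
Qed.

Fixpoint mk (b : nat -> bool) w : nat :=
  if w is w'.+1 then b 0 + (mk (fun i => b i.+1) w').*2 else 0.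

Lemma mk_lt b w : mk b w < 2 ^ w.
Proof.
elim: w b => [|w IH] b //=.
have := IH (fun i => b i.+1); rewrite expnS -muln2; case: (b 0) => /=; lia.
Qed.

Lemma bitn_mk b w i : i < w -> bitn i (mk b w) = b i.
Proof.
elim: w b i => [|w IH] b [|i] //= hi.
  by rewrite bitn0 oddD odd_double addbF oddb.
by rewrite bitnS half_bit_double IH.
Qed.

Definition mkI w b : 'I_(2 ^ w) := Ordinal (mk_lt b w).

Section Emb.
Variable C : numClosedFieldType.
Variables (w k : nat) (p : 'I_k -> 'I_w).
Local Open Scope ring_scope.

Definition agree (r t : 'I_(2^w)) : bool :=
  [forall i : 'I_w, (i \notin codom p) ==> (bitn i r == bitn i t)].

Definition pk (r : 'I_(2^w)) : 'I_(2^k) :=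
  mkI k (fun l => match (insub l : option 'I_k) with Some o => bitn (p o) r | None => false end).

Lemma bitn_pk (o : 'I_k) r : bitn o (pk r) = bitn (p o) r.
Proof. by rewrite /pk /mkI /= bitn_mk // valK. Qed.

Lemma pk_eq x r : (x == pk r) = [forall l : 'I_k, bitn l x == bitn (p l) r].
Proof.
apply/eqP/forallP => [-> l|H]; first by rewrite bitn_pk.
apply: val_inj; apply: (@bitn_ext k) => // [||i hi]; rewrite ?ltn_ord //.
by have := bitn_pk (Ordinal hi) r; rewrite /= => ->; apply/eqP/(H (Ordinal hi)).
Qed.

Definition mg (r : 'I_(2^w)) (x : 'I_(2^k)) : 'I_(2^w) :=
  mkI w (fun i => match (insub i : option 'I_w) with
                  | Some o => if [pick l | p l == o] is Some l then bitn l x else bitn i r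
                  | None => false end).

Lemma bitn_mg_n (i : 'I_w) r x : i \notin codom p -> bitn i (mg r x) = bitn i r.
Proof.
move=> hi; rewrite /mg /mkI /= bitn_mk // valK; case: pickP => // l /eqP hl.
by rewrite -hl codom_f in hi.
Qed.

Hypothesis inj : injective p.

Lemma bitn_mg_p (l : 'I_k) r x : bitn (p l) (mg r x) = bitn l x.
Proof.
rewrite /mg /mkI /= bitn_mk // valK; case: pickP => [l' /eqP/inj -> //|/(_ l)].
by rewrite eqxx.
Qed.

Lemma agree_refl r : agree r r.
Proof. by apply/forallP => i; apply/implyP. Qed.

Lemma agree_sym r t : agree r t = agree t r.
Proof.
by apply/forallP/forallP => H i; apply/implyP => hi; have := implyP (H i) hi; rewrite eq_sym.
Qed.

Lemma agree_trans r t u : agree r t -> agree t u -> agree r u.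
Proof.
move=> /forallP H1 /forallP H2; apply/forallP => i; apply/implyP => hi.
by rewrite (eqP (implyP (H1 i) hi)) (implyP (H2 i) hi).
Qed.

Lemma mgP r x u : (agree r u && (pk u == x)) = (u == mg r x).
Proof.
apply/andP/eqP => [[ha /eqP hx]|->].
  apply: val_inj; apply: (@bitn_ext w) => // [||i hi]; rewrite ?ltn_ord //.
  have -> : i = Ordinal hi by [].
  case: (boolP (Ordinal hi \in codom p)) => [/codomP [l ->]| ho].
    by rewrite bitn_mg_p -bitn_pk hx.
  by rewrite bitn_mg_n //; have := implyP (forallP ha (Ordinal hi)) ho => /eqP ->.
split.
  by apply/forallP => i; apply/implyP => hi; rewrite bitn_mg_n.
by apply/eqP/esym/eqP; rewrite pk_eq; apply/forallP => l; rewrite bitn_mg_p.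
Qed.

Lemma agree_pk r t : agree r t -> pk r = pk t -> r = t.
Proof.
move=> ha hp; apply: val_inj; apply: (@bitn_ext w) => // [||i hi]; rewrite ?ltn_ord //.
have -> : i = Ordinal hi by [].
case: (boolP (Ordinal hi \in codom p)) => [/codomP [l ->]| ho].
  by rewrite -!bitn_pk hp.
by apply/eqP; apply: (implyP (forallP ha (Ordinal hi)) ho).
Qed.

Lemma sum_agree r (G : 'I_(2^k) -> C) :
  \sum_(u : 'I_(2^w)) (if agree r u then G (pk u) else 0) = \sum_x G x.
Proof.
transitivity (\sum_(u : 'I_(2^w)) \sum_(x : 'I_(2^k))
                 (if agree r u && (pk u == x) then G x else 0)).
  apply: eq_bigr => u _; case: ifP => hr /=.
    by rewrite -big_mkcond /=; under eq_bigl => x do rewrite eq_sym; rewrite big_pred1_eq.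
  by rewrite big1.
rewrite exchange_big /=; apply: eq_bigr => x _.
by under eq_bigr => u _ do rewrite mgP; rewrite -big_mkcond big_pred1_eq.
Qed.

End Emb.

Section Emb2.
Variable C : numClosedFieldType.
Variables (w k : nat) (p : 'I_k -> 'I_w).
Local Open Scope ring_scope.

Lemma embedE (V : 'M[C]_(2^k)) r t :
  embed p V r t = if agree p r t then V (pk p r) (pk p t) else 0.
Proof.
rewrite /agree mxE; case: ifP => // _.
rewrite (big_pred1 (pk p r)) => [|x]; last by rewrite /= pk_eq.
by rewrite (big_pred1 (pk p t)) => [|x]; last by rewrite /= pk_eq.
Qed.

Lemma daggerE n (M : 'M[C]_n) i j : dagger M i j = (M j i)^*.
Proof. by rewrite /dagger !mxE. Qed.

Lemma embed_unitary (V : 'M[C]_(2^k)) : injective p -> unitary V -> unitary (embed p V).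
Proof.
move=> inj /eqP hV; apply/eqP/matrixP => r t.
rewrite [LHS]mxE [RHS]mxE.
under eq_bigr => u _ do rewrite daggerE !embedE.
case: (boolP (agree p r t)) => hrt.
  transitivity (\sum_u (if agree p r u then
        (V (pk p r) (pk p u) * (V (pk p t) (pk p u))^*) else 0)).
    apply: eq_bigr => u _; case: ifP => hru; last by rewrite mul0r.
    have -> // : agree p t u.
    by apply: (agree_trans _ hru); rewrite agree_sym.
  rewrite (sum_agree inj r (fun x => V (pk p r) x * (V (pk p t) x)^*)).
  have := congr1 (fun M : 'M[C]_(2^k) => M (pk p r) (pk p t)) hV; rewrite /= [LHS]mxE [RHS]mxE => H.
  rewrite (_ : (r == t) = (pk p r == pk p t)); last first.
    by apply/eqP/eqP => [->|/(agree_pk hrt)->].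
  by rewrite -H; apply: eq_bigr => x _; rewrite daggerE.
rewrite big1.
  by case: eqP => // e; rewrite e agree_refl in hrt.
move=> u _; case: ifP => hru; last by rewrite mul0r.
case: ifP => htu; last by rewrite rmorph0 mulr0.
by move: hrt; rewrite (agree_trans hru) // agree_sym.
Qed.

End Emb2.
Local Open Scope ring_scope.

Section G.
Variable C : numClosedFieldType.

Lemma perm_mxE n (s : {perm 'I_n}) x y : (perm_mx s : 'M[C]_n) x y = (s x == y)%:R.
Proof. by rewrite /perm_mx !mxE. Qed.

Lemma perm_unitary n (s : {perm 'I_n}) : unitary (perm_mx s : 'M[C]_n).
Proof.
rewrite /unitary; have -> : dagger (perm_mx s : 'M[C]_n) = (perm_mx s)^T.
  by apply/matrixP => i j; rewrite daggerE [RHS]mxE !perm_mxE conjC_nat.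
by rewrite tr_perm_mx -perm_mxM mulgV perm_mx1.
Qed.

Variables (w k : nat) (p : 'I_k -> 'I_w).
Hypothesis inj : injective p.

Lemma embed_permL (s : {perm 'I_(2^k)}) r t :
  embed p (perm_mx s : 'M[C]_(2^k)) r t = (t == mg p r (s (pk p r)))%:R.
Proof.
rewrite embedE perm_mxE -(mgP inj); case: (agree p r t) => //=.
by rewrite eq_sym.
Qed.

Lemma embed_permR (s : {perm 'I_(2^k)}) r t :
  embed p (perm_mx s : 'M[C]_(2^k)) r t = (r == mg p t ((s^-1)%g (pk p t)))%:R.
Proof.
rewrite embedE perm_mxE -(mgP inj) agree_sym; case: (agree p t r) => //=.
rewrite (_ : (s (pk p r) == pk p t) = (pk p r == (s^-1)%g (pk p t))) //.
by apply/eqP/eqP => [<-|->]; rewrite ?permK ?permKV.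
Qed.

Lemma mulPl n (G N : 'M[C]_n) f r t :
  (forall u, G r u = (u == f)%:R) -> (G *m N) r t = N f t.
Proof.
move=> H; rewrite mxE (bigD1 f) //= H eqxx mul1r big1 ?addr0 // => u hu.
by rewrite H (negbTE hu) mul0r.
Qed.

Lemma mulPr n (G N : 'M[C]_n) h r t :
  (forall v, G v t = (v == h)%:R) -> (N *m G) r t = N r h.
Proof.
move=> H; rewrite mxE (bigD1 h) //= H eqxx mulr1 big1 ?addr0 // => u hu.
by rewrite H (negbTE hu) mulr0.
Qed.

End G.
Local Open Scope ring_scope.

Section Main.
Variable C : numClosedFieldType.
Variables (s a : nat).
Local Notation w := (a + s + 3 + s)%N.

Lemma wS_lt (i : 'I_s) : (i < w)%N. Proof. have := ltn_ord i; lia. Qed.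
Lemma wR_lt (i : 'I_s) : (s + i < w)%N. Proof. have := ltn_ord i; lia. Qed.
Definition wS i : 'I_w := Ordinal (wS_lt i).
Definition wR i : 'I_w := Ordinal (wR_lt i).
Definition gp (i : 'I_s) (l : 'I_2) : 'I_w := if val l == 0%N then wS i else wR i.

Lemma gp_inj i : injective (gp i).
Proof.
have := ltn_ord i.
move=> hi [[|[|?]] h1] [[|[|?]] h2] //= e; try by apply: val_inj.
- by move: e => /(congr1 val) /=; lia.
- by move: e => /(congr1 val) /=; lia.
Qed.

Definition fsig (c d : bool) (x : 'I_(2^2)) : 'I_(2^2) :=
  mkI 2 (fun m => if m == 0%N then bitn 0 x else bitn 1 x (+) c (+) (d && bitn 0 x)).

Lemma fsig0 c d x : bitn 0 (fsig c d x) = bitn 0 x.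
Proof. exact: bitn_mk. Qed.
Lemma fsig1 c d x : bitn 1 (fsig c d x) = bitn 1 x (+) c (+) (d && bitn 0 x).
Proof. exact: bitn_mk. Qed.

Lemma fsigK c d : involutive (fsig c d).
Proof.
move=> x; apply: val_inj; apply: (@bitn_ext 2) => // [||i]; rewrite ?ltn_ord //.
case: i => [|[|i]] // _; rewrite ?fsig0 ?fsig1 ?fsig0 //.
by case: (bitn 1 x); case: c; case: d; case: (bitn 0 x).
Qed.

Definition sig c d : {perm 'I_(2^2)} := perm (can_inj (fsigK c d)).
Lemma sigE c d x : sig c d x = fsig c d x. Proof. by rewrite permE. Qed.
Lemma sigV c d x : (sig c d)^-1%g x = sig c d x.
Proof. by have := permK (sig c d) (fsig c d x); rewrite sigE fsigK => ->; rewrite sigE. Qed.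

Definition gateG i c d : gate C w := @Gate C w 2 (gp i) (perm_mx (sig c d)).
Definition F i c d (r : 'I_(2^w)) := mg (gp i) r (sig c d (pk (gp i) r)).

Lemma gateG_L i c d r u : gate_mx (gateG i c d) r u = (u == F i c d r)%:R.
Proof. by rewrite /gate_mx /= embed_permL //; exact: gp_inj. Qed.

Lemma gateG_R i c d v t : gate_mx (gateG i c d) v t = (v == F i c d t)%:R.
Proof. by rewrite /gate_mx /= embed_permR ?sigV //; exact: gp_inj. Qed.

Lemma bitn_F i c d r (m : nat) : (m < w)%N ->
  bitn m (F i c d r) = if m == (s + i)%N then bitn (s + i) r (+) c (+) (d && bitn i r)
                       else bitn m r.
Proof.
move=> hm; have -> : m = Ordinal hm by [].
case: (boolP (Ordinal hm \in codom (gp i))) => [/codomP [l ->]|hn].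
  rewrite /F bitn_mg_p; last exact: gp_inj.
  rewrite sigE.
  case: l => [[|[|l]] hl] //.
    rewrite fsig0 (bitn_pk (gp i) (Ordinal hl) r) /=.
    by case: eqP => // e; have := ltn_ord i; lia.
  rewrite -[nat_of_ord (Ordinal hl)]/1%N -[gp i (Ordinal hl)]/(wR i).
  rewrite fsig1 (bitn_pk (gp i) (Ordinal hl) r) (bitn_pk (gp i) (@Ordinal 2 0 isT) r) /=.
  by rewrite eqxx.
rewrite /F bitn_mg_n //.
case: eqP => //= e; exfalso; move: hn; apply/negP/negPn.
have -> : Ordinal hm = gp i (@Ordinal 2 1 isT) by apply: val_inj.
exact: codom_f.
Qed.


Definition stepG (cf : 'I_s -> bool) d (i : 'I_s) : ostep C w (a + s) :=
  OLayer _ [:: gateG i (cf i) d].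
Definition stepsG cf d (l : seq 'I_s) := map (stepG cf d) l.

Lemma ostep_G (U : 'M[C]_(2^(a+s))) cf d i : ostep_mx U (stepG cf d i) = gate_mx (gateG i (cf i) d).
Proof. by rewrite /= /layer_mx /= mulmx1. Qed.

Lemma foldl_gen (U : 'M[C]_(2^(a+s))) (q : ocircuit C w (a+s)) (M0 : 'M[C]_(2^w)) :
  foldl (fun M st => ostep_mx U st *m M) M0 q = ocircuit_mx U q *m M0.
Proof.
rewrite /ocircuit_mx; elim: q M0 => [|st q IH] M0 /=; first by rewrite mul1mx.
by rewrite IH [in RHS]IH mulmx1 mulmxA.
Qed.

Lemma ocmx_cons (U : 'M[C]_(2^(a+s))) (st : ostep C w (a+s)) (q : ocircuit C w (a+s)) : ocircuit_mx U (st :: q) = ocircuit_mx U q *m ostep_mx U st.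
Proof. by rewrite {1}/ocircuit_mx /= mulmx1 foldl_gen. Qed.

Lemma ocmx_cat (U : 'M[C]_(2^(a+s))) (q1 q2 : ocircuit C w (a+s)) : ocircuit_mx U (q1 ++ q2) = ocircuit_mx U q2 *m ocircuit_mx U q1.
Proof. by rewrite {1}/ocircuit_mx foldl_cat foldl_gen. Qed.

Fixpoint FL cf d (l : seq 'I_s) r := if l is i :: l' then F i (cf i) d (FL cf d l' r) else r.
Fixpoint FR cf d (l : seq 'I_s) t := if l is i :: l' then FR cf d l' (F i (cf i) d t) else t.

Lemma mulFL (U : 'M[C]_(2^(a+s))) cf d l (N : 'M[C]_(2^w)) r t :
  (ocircuit_mx U (stepsG cf d l) *m N) r t = N (FL cf d l r) t.
Proof.
elim: l N r t => [|i l IH] N r t /=; first by rewrite /ocircuit_mx /= mul1mx.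
rewrite ocmx_cons ostep_G -mulmxA IH.
by apply: mulPl => u; rewrite gateG_L.
Qed.

Lemma mulFR (U : 'M[C]_(2^(a+s))) cf d l (N : 'M[C]_(2^w)) r t :
  (N *m ocircuit_mx U (stepsG cf d l)) r t = N r (FR cf d l t).
Proof.
elim: l N r t => [|i l IH] N r t /=; first by rewrite /ocircuit_mx /= mulmx1.
rewrite ocmx_cons ostep_G mulmxA.
rewrite (@mulPr _ _ _ _ (F i (cf i) d t)); last by move=> v; rewrite gateG_R.
by rewrite IH.
Qed.

Definition xb cf d (l : seq 'I_s) (r : 'I_(2^w)) m :=
  \big[addb/false]_(i <- l) ((m == s + i)%N && (cf i (+) (d && bitn i r))).

Lemma xb_small cf d l r m : (m < s)%N -> xb cf d l r m = false.
Proof.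
move=> hm; rewrite /xb big1_seq // => i _.
by case: eqP => //= e; move: hm; rewrite e; lia.
Qed.

Lemma bitn_FL cf d l r m : (m < w)%N -> bitn m (FL cf d l r) = bitn m r (+) xb cf d l r m.
Proof.
move=> hm; elim: l => [|i l IH] /=; first by rewrite /xb big_nil addbF.
have hi : bitn i (FL cf d l r) = bitn i r.
  have := ltn_ord i => his.
  elim: l {IH} => [|i' l' IH'] //=.
  rewrite bitn_F; last by have := ltn_ord i; lia.
  by case: eqP => [e|_ //]; have := ltn_ord i; lia.
rewrite bitn_F // /xb big_cons -/(xb cf d l r m) hi.
case: eqP => [e|_] /=; last by [].
by rewrite -e IH; case: (bitn m r); case: (xb cf d l r m); case: (cf i); case: (d && bitn i r).
Qed.

Lemma bitn_FR cf d l t m : (m < w)%N -> bitn m (FR cf d l t) = bitn m t (+) xb cf d l t m.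
Proof.
elim: l t => [|i l IH] t hm /=; first by rewrite /xb big_nil addbF.
rewrite IH // bitn_F //.
have -> : xb cf d l (F i (cf i) d t) m = xb cf d l t m.
  rewrite /xb; apply: eq_bigr => i' _; rewrite bitn_F; last by have := ltn_ord i'; lia.
  by rewrite (_ : (i' == s + i :> nat) = false) //; apply/eqP; have := ltn_ord i'; lia.
rewrite /xb big_cons -/(xb cf d l t m).
case: eqP => [e|_] /=; last by [].
by rewrite -e; case: (bitn m t); case: (xb cf d l t m); case: (cf i); case: (d && bitn i t).
Qed.


Lemma xb_out cf d r m : ~~ ((s <= m) && (m < s + s))%N -> xb cf d (enum 'I_s) r m = false.
Proof.
move=> hm; rewrite /xb big1_seq // => i _; case: eqP => //= e.
by move: hm; rewrite e; have := ltn_ord i; lia.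
Qed.

Lemma xb_in cf d r (i0 : 'I_s) : xb cf d (enum 'I_s) r (s + i0) = cf i0 (+) (d && bitn i0 r).
Proof.
rewrite /xb big_enum /= (bigD1 i0) //= eqxx /= big1 ?addbF // => i hi.
rewrite eqn_add2l; case: eqP => //= e.
by move: hi; rewrite (_ : i = i0) ?eqxx //; apply: val_inj.
Qed.

Lemma pU_lt (l : 'I_(a + s)) : (s + l < w)%N. Proof. have := ltn_ord l; lia. Qed.
Definition pU (l : 'I_(a + s)) : 'I_w := Ordinal (pU_lt l).
Lemma pU_inj : injective pU.
Proof. by move=> l1 l2 /(congr1 val) /= /eqP; rewrite eqn_add2l => /eqP e; apply: val_inj. Qed.

Lemma notin_pU (m : 'I_w) : m \notin codom pU -> ((m < s) || (s + (a + s) <= m))%N.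
Proof.
move=> hm; case: (ltnP m s) => //= h1; case: (leqP (s + (a + s)) m) => //= h2.
have hl : (m - s < a + s)%N by lia.
move: hm; rewrite (_ : m = pU (Ordinal hl)) ?codom_f //.
by apply: val_inj => /=; lia.
Qed.

Section JK.
Variables (j k : 'I_(2 ^ s)).
Definition cfJ (i : 'I_s) := bitn i j.
Definition cfK (i : 'I_s) := bitn i j (+) bitn i k.

Definition Q : ocircuit C w (a + s) :=
  stepsG cfJ false (enum 'I_s) ++ @OCall C w (a + s) pU false :: stepsG cfK true (enum 'I_s).

Definition wid (r0 : 'I_(2^s)) : 'I_(2^w) := widen_ord (exp2_le s (a + s + 3)) r0.
Definition RR r0 := FL cfK true (enum 'I_s) (wid r0).
Definition TT t0 := FR cfJ false (enum 'I_s) (wid t0).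

Lemma Q_entry (U : 'M[C]_(2^(a+s))) r t :
  ocircuit_mx U Q r t = embed pU U (FL cfK true (enum 'I_s) r) (FR cfJ false (enum 'I_s) t).
Proof. by rewrite /Q ocmx_cat ocmx_cons mulFR mulFL. Qed.

Lemma bRR r0 m : (m < w)%N -> bitn m (RR r0) = bitn m r0 (+) xb cfK true (enum 'I_s) (wid r0) m.
Proof. by move=> hm; rewrite /RR bitn_FL. Qed.
Lemma bTT t0 m : (m < w)%N -> bitn m (TT t0) = bitn m t0 (+) xb cfJ false (enum 'I_s) (wid t0) m.
Proof. by move=> hm; rewrite /TT bitn_FR. Qed.

Lemma agreeRT r0 t0 : agree pU (RR r0) (TT t0) = (r0 == t0).
Proof.
apply/forallP/eqP => [H|<-].
  apply: val_inj; apply: (@bitn_ext s) => // [||i hi]; rewrite ?ltn_ord //.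
  have him : (i < w)%N by lia.
  have hn : Ordinal him \notin codom pU.
    by apply/negP => /codomP [l /(congr1 val) /= e]; lia.
  have := implyP (H (Ordinal him)) hn.
  by rewrite /= bRR // bTT // !xb_small // !addbF => /eqP.
move=> m; apply/implyP => /notin_pU /orP [h|h].
  by rewrite bRR // bTT // !xb_small.
rewrite bRR // bTT // !xb_out; try by apply/negP; lia.
Qed.

Lemma pkTT t0 : pk pU (TT t0) = widen_ord (exp2_le s a) j.
Proof.
apply: val_inj; apply: (@bitn_ext (a + s)) => // [||l hl]; rewrite ?ltn_ord //.
rewrite (bitn_pk pU (Ordinal hl)) /= bTT; last by have := pU_lt (Ordinal hl).
rewrite (@bitn_big s t0) //; last by lia.
case: (ltnP l s) => hls.
  by have := xb_in cfJ false (wid t0) (Ordinal hls); rewrite /= => ->; rewrite addbF.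
rewrite xb_out; last by apply/negP; lia.
by rewrite (@bitn_big s j).
Qed.

Definition m0 (r0 : 'I_(2^s)) : 'I_(2^s) := mkI s (fun l => bitn l j (+) bitn l k (+) bitn l r0).

Lemma pkRR r0 : pk pU (RR r0) = widen_ord (exp2_le s a) (m0 r0).
Proof.
apply: val_inj; apply: (@bitn_ext (a + s)) => // [||l hl]; rewrite ?ltn_ord //.
rewrite (bitn_pk pU (Ordinal hl)) /= bRR; last by have := pU_lt (Ordinal hl).
rewrite (@bitn_big s r0) //; last by lia.
case: (ltnP l s) => hls.
  have := xb_in cfK true (wid r0) (Ordinal hls); rewrite /= => ->.
  by rewrite /m0 /mkI /= bitn_mk.
rewrite xb_out; last by apply/negP; lia.
by rewrite (@bitn_big s (m0 r0)).
Qed.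

Lemma m0_eq r0 : (m0 r0 == j) = (r0 == k).
Proof.
apply/eqP/eqP => [e|->].
  apply: val_inj; apply: (@bitn_ext s) => // [||l hl]; rewrite ?ltn_ord //.
  have := congr1 (fun z : 'I_(2^s) => bitn l z) e; rewrite /m0 /mkI /= bitn_mk //.
  by case: (bitn l j); case: (bitn l k); case: (bitn l r0).
apply: val_inj; apply: (@bitn_ext s) => // [||l hl]; rewrite ?ltn_ord //.
rewrite /m0 /mkI /= bitn_mk //.
by case: (bitn l j); case: (bitn l k).
Qed.

Lemma Q_val (U : 'M[C]_(2^(a+s))) (x : 'I_(2^s) -> C)
  (hU : forall i j0 : 'I_(2^s), U (widen_ord (exp2_le s a) i) (widen_ord (exp2_le s a) j0)
           = diagX x i j0) r0 t0 :
  ocircuit_mx U Q (wid r0) (wid t0) = (x j *: delta_mx k k) r0 t0.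
Proof.
rewrite Q_entry embedE -/(RR r0) -/(TT t0) agreeRT pkRR pkTT hU.
rewrite /diagX [RHS]mxE !mxE.
case: eqP => [<-|ne].
  case e: (r0 == k).
    have -> : m0 r0 = j by apply/eqP; rewrite m0_eq.
    by rewrite eqxx andbb mulr1.
  by rewrite m0_eq e andbF mulr0.
case: (r0 =P k) => [e1|]; last by rewrite mulr0.
case: (t0 =P k) => [e2|]; last by rewrite mulr0.
by case: ne; rewrite e1 e2.
Qed.

End JK.

Lemma dagger_mul n (A B : 'M[C]_n) : dagger (A *m B) = dagger B *m dagger A.
Proof. by rewrite /dagger map_mxM trmx_mul. Qed.

Lemma unitary_mul n (A B : 'M[C]_n) : unitary A -> unitary B -> unitary (A *m B).
Proof.
rewrite /unitary => /eqP hA /eqP hB.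
by rewrite dagger_mul mulmxA -(mulmxA A) hB mulmx1 hA.
Qed.

Lemma unitary1 n : unitary (1%:M : 'M[C]_n).
Proof. by rewrite /unitary /dagger map_mx1 trmx1 mulmx1. Qed.

Lemma stepsG_unitary (U : 'M[C]_(2^(a+s))) cf d l :
  unitary (ocircuit_mx U (stepsG cf d l)).
Proof.
elim: l => [|i l IH]; first exact: unitary1.
rewrite /stepsG map_cons ocmx_cons ostep_G; apply: unitary_mul => //.
by apply: embed_unitary; [exact: gp_inj | exact: perm_unitary].
Qed.

Lemma Q_unitary (U : 'M[C]_(2^(a+s))) j k : unitary U -> unitary (ocircuit_mx U (Q j k)).
Proof.
move=> hU; rewrite /Q ocmx_cat ocmx_cons.
apply: unitary_mul; last exact: stepsG_unitary.
apply: unitary_mul; first exact: stepsG_unitary.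
by apply: embed_unitary => //; exact: pU_inj.
Qed.

Lemma stepsG_ok cf d l : all (@ostep_ok C w (a + s)) (stepsG cf d l).
Proof.
elim: l => [|i l IH] //=; rewrite IH andbT /layer_ok /= andbT cats0.
rewrite /gate_ok /= perm_unitary /gate_wires /=.
by rewrite map_inj_uniq ?enum_uniq //; exact: gp_inj.
Qed.

Lemma Q_ok j k : ocircuit_ok (Q j k).
Proof.
rewrite /ocircuit_ok /Q all_cat stepsG_ok /= stepsG_ok andbT.
by apply/injectiveP; exact: pU_inj.
Qed.

Lemma stepsG_calls cf d l : ncalls (stepsG cf d l) = 0%N.
Proof. by elim: l. Qed.

Lemma Q_calls j k : ncalls (Q j k) = 1%N.
Proof.
rewrite /ncalls /Q count_cat /=.
by have := stepsG_calls (cfK j k) true (enum 'I_s); have := stepsG_calls (cfJ j) false (enum 'I_s);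
  rewrite /ncalls => -> ->.
Qed.

Lemma stepsG_depth dU cf d l : odepth dU (stepsG cf d l) = size l.
Proof. by elim: l => [|i l IH]; rewrite /odepth ?big_nil // /stepsG map_cons big_cons -/(odepth _ _) IH. Qed.

Lemma Q_depth dU j k : odepth dU (Q j k) = (s + dU + s)%N.
Proof.
rewrite /Q /odepth big_cat big_cons /= -!/(odepth _ _) !stepsG_depth size_enum_ord.
by rewrite addnA.
Qed.

End Main.
End Helpers.
Import Helpers.
Unset Implicit Arguments.

Local Open Scope ring_scope.

Theorem lemma2 (C : numClosedFieldType) (c : nat) :
  exists K : nat,
  forall (s a : nat) (j k : 'I_(2 ^ s)),
  exists Q : ocircuit C ((a + s + 3) + s) (a + s),
    ocircuit_ok Q /\ (ncalls Q <= 2)%N /\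
    forall (x : 'I_(2 ^ s) -> C) (CU : circuit C (a + s)),
      (forall i, x i \is Num.real) ->
      (forall i, `|x i| < 1) ->
      circuit_ok CU ->
      (depth CU <= c * s + c)%N ->
      block_encoding (circuit_mx CU) (diagX x) ->
      block_encoding (ocircuit_mx (circuit_mx CU) Q) (x j *: delta_mx k k) /\
      (odepth (depth CU) Q <= K * s + K)%N.
Proof.
exists (c + 2)%N => s a j k.
exists (@Q C s a j k).
split; first exact: Q_ok.
split; first by rewrite Q_calls.
move=> x CU _ _ _ hd [hU hUb].
split; last by rewrite Q_depth; move: hd; rewrite !mulnDl; lia.
split; first exact: Q_unitary.
move=> r0 t0.
exact: Q_val.
Qed.
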